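(* Let $f:\mathbb{N}_+\to\mathbb{N}_+$ be strictly increasing and let $g:\mathbb{R}_{\ge0}\to\mathbb{R}_{\ge0}$ be continuous and bijective with $g(n)=f(n)$ for all $n\in\mathbb{N}_+$. Then $L_{\mathbb{N}_+}(f)^{-1}\in\Theta(g^{-1})$.
   Context: For $h:\mathbb{N}_+\to\mathbb{N}_+$, the linear interpolation $L_{\mathbb{N}_+}(h):\mathbb{R}_{\ge0}\to\mathbb{R}_{\ge0}$ is the polygonal chain starting at $(0,0)$ and passing through the points $(n,h(n))$, $n\in\mathbb{N}_+$, in increasing order of $n$. $\Theta$ denotes asymptotic equivalence up to constant factors as $x\to\infty$. *)

(* Defs.v *)
From Stdlib Require Export Reals Lra Lia.
Open Scope R_scope.

(* h extended to 0 by h(0) = 0 (the chain starts at (0,0)). *)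
Definition ext0 (h : nat -> nat) (n : nat) : R :=
  match n with O => 0 | S _ => INR (h n) end.

Definition nfloor (x : R) : nat := Z.to_nat (Int_part x).

(* Linear interpolation L_{N+}(h) : polygonal chain through (0,0) and (n, h n), n >= 1.
   On [k, k+1] (k = floor x) it is the affine segment between (k, h k) and (k+1, h (k+1)). *)
Definition linterp (h : nat -> nat) (x : R) : R :=
  let k := nfloor x in
  ext0 h k + (x - INR k) * (ext0 h (S k) - ext0 h k).

Definition cont_on_nonneg (g : R -> R) : Prop :=
  forall x, 0 <= x -> forall eps, 0 < eps -> exists delta, 0 < delta /\
    forall y, 0 <= y -> Rabs (y - x) < delta -> Rabs (g y - g x) < eps.

Definition bij_nonneg (g : R -> R) : Prop :=
  (forall x, 0 <= x -> 0 <= g x) /\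
  (forall x y, 0 <= x -> 0 <= y -> g x = g y -> x = y) /\
  (forall y, 0 <= y -> exists x, 0 <= x /\ g x = y).

(* ginv is the inverse of a bijection g of [0,+oo): ginv maps [0,+oo) into [0,+oo)
   and g (ginv y) = y there (this determines ginv uniquely on [0,+oo)). *)
Definition is_inv_nonneg (g ginv : R -> R) : Prop :=
  forall y, 0 <= y -> 0 <= ginv y /\ g (ginv y) = y.

Definition bigTheta (u v : R -> R) : Prop :=
  exists c1 c2 x0, 0 < c1 /\ 0 < c2 /\
    forall x, x0 <= x -> c1 * Rabs (v x) <= Rabs (u x) /\ Rabs (u x) <= c2 * Rabs (v x).

(* Main.v *)
Require Import Defs.
From Stdlib Require Import ZArith Ranalysis5.

Lemma f_ge (f : nat -> nat)
  (f_pos : forall n, (0 < n)%nat -> (0 < f n)%nat)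
  (f_incr : forall m n, (0 < m)%nat -> (m < n)%nat -> (f m < f n)%nat) :
  forall m, (0 < m)%nat -> (m <= f m)%nat.
Proof.
  induction m as [|m IH]; intros H; [lia|].
  destruct m; [specialize (f_pos 1%nat); lia|].
  specialize (IH ltac:(lia)). specialize (f_incr (S m) (S (S m)) ltac:(lia) ltac:(lia)). lia.
Qed.

Lemma ext0_lt (f : nat -> nat)
  (f_pos : forall n, (0 < n)%nat -> (0 < f n)%nat)
  (f_incr : forall m n, (0 < m)%nat -> (m < n)%nat -> (f m < f n)%nat) :
  forall i j, (i < j)%nat -> ext0 f i < ext0 f j.
Proof.
  intros i j Hij. destruct j; [lia|]. destruct i; simpl.
  - apply lt_0_INR. apply f_pos. lia.
  - apply lt_INR. apply f_incr; lia.
Qed.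

Lemma ext0_le (f : nat -> nat)
  (f_pos : forall n, (0 < n)%nat -> (0 < f n)%nat)
  (f_incr : forall m n, (0 < m)%nat -> (m < n)%nat -> (f m < f n)%nat) :
  forall i j, (i <= j)%nat -> ext0 f i <= ext0 f j.
Proof.
  intros i j Hij. destruct (Nat.eq_dec i j). subst; lra.
  left; apply ext0_lt; auto; lia.
Qed.

Lemma nfloor_spec x : 0 <= x -> INR (nfloor x) <= x < INR (nfloor x) + 1.
Proof.
  intros Hx. destruct (base_Int_part x) as [H1 H2].
  assert (Hz : (0 <= Int_part x)%Z).
  { assert (IZR (Int_part x) > -1) by lra.
    assert (-1 < Int_part x)%Z by (apply lt_IZR; lra). lia. }
  unfold nfloor. rewrite INR_IZR_INZ, Z2Nat.id by exact Hz. lra.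
Qed.

Lemma find_n (f : nat -> nat) (y : R) :
  INR (f 1%nat) <= y -> forall m, y < INR (f (S m)) ->
  exists n, (1 <= n)%nat /\ INR (f n) <= y /\ y < INR (f (S n)).
Proof.
  intros Hy m. induction m as [|m IH]; intros Hm; [lra|].
  destruct (Rlt_le_dec y (INR (f (S m)))) as [H|H].
  - apply IH; auto.
  - exists (S m). repeat split; auto. lia.
Qed.

Theorem lemma3 (f : nat -> nat) (g Linv ginv : R -> R)
  (f_pos : forall n, (0 < n)%nat -> (0 < f n)%nat)
  (f_incr : forall m n, (0 < m)%nat -> (m < n)%nat -> (f m < f n)%nat)
  (g_cont : cont_on_nonneg g)
  (g_bij : bij_nonneg g)
  (g_interp : forall n, (0 < n)%nat -> g (INR n) = INR (f n))
  (hLinv : is_inv_nonneg (linterp f) Linv)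
  (hginv : is_inv_nonneg g ginv) :
  bigTheta Linv ginv.
Proof.
  exists (/2), 2, (INR (f 1%nat)). split; [lra|]. split; [lra|].
  intros y Hy.
  assert (Hy0 : 0 <= y) by (pose proof (pos_INR (f 1%nat)); lra).
  assert (Hn : exists n, (1 <= n)%nat /\ INR (f n) <= y /\ y < INR (f (S n))).
  { apply (find_n f y Hy (Z.to_nat (up y))).
    destruct (archimed y) as [A1 A2].
    assert (Hz : (0 <= up y)%Z) by (assert (-1 < up y)%Z by (apply lt_IZR; lra); lia).
    pose proof (f_ge f f_pos f_incr (S (Z.to_nat (up y))) ltac:(lia)) as Hf.
    apply le_INR in Hf. rewrite S_INR, INR_IZR_INZ, Z2Nat.id in Hf by exact Hz. lra. }
  destruct Hn as [n [Hn1 [Hfn Hfn1]]].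
  assert (Hn1R : 1 <= INR n) by (apply (le_INR 1); lia).
  assert (HL : INR n <= Linv y <= INR n + 1).
  { destruct (hLinv y Hy0) as [Lx0 HLx].
    set (x := Linv y) in *. unfold linterp in HLx.
    destruct (nfloor_spec x Lx0) as [K1 K2].
    set (k := nfloor x) in *.
    assert (Hab := ext0_lt f f_pos f_incr k (S k) ltac:(lia)).
    assert (Ha : ext0 f k <= y) by nra.
    assert (Hb : y < ext0 f (S k)) by nra.
    assert (k = n).
    { destruct (Nat.lt_trichotomy k n) as [C|[C|C]]; auto.
      - pose proof (ext0_le f f_pos f_incr (S k) n ltac:(lia)).
        destruct n; [lia|]. simpl in *. lra.
      - pose proof (ext0_le f f_pos f_incr (S n) k ltac:(lia)).
        simpl in *. lra. }
    subst k. rewrite <- H. lra. }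
  assert (HG : INR n <= ginv y <= INR n + 1).
  { destruct (hginv y Hy0) as [Gx0 HGx].
    destruct g_bij as [_ [ginj _]].
    destruct (Req_dec y (INR (f n))) as [E|E].
    - assert (ginv y = INR n).
      { apply ginj; auto. apply pos_INR. rewrite HGx, g_interp by lia. auto. }
      lra.
    - assert (Hc : forall a, INR n <= a <= INR n + 1 -> continuity_pt (fun t => g t - y) a).
      { intros a Ha eps Heps.
        destruct (g_cont a ltac:(lra) eps Heps) as [d [Hd Hd2]].
        exists (Rmin d 1). split. { apply Rmin_pos; lra. }
        intros t [_ Ht]. simpl in *. unfold R_dist in *.
        assert (Rabs (t - a) < d) by (pose proof (Rmin_l d 1); lra).
        assert (Rabs (t - a) < 1) by (pose proof (Rmin_r d 1); lra).
        replace (g t - y - (g a - y)) with (g t - g a) by ring.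
        apply Hd2; auto. apply Rabs_def2 in H0. lra. }
      destruct (IVT_interv (fun t => g t - y) (INR n) (INR n + 1) Hc ltac:(lra))
        as [z [Hz1 Hz2]].
      + rewrite g_interp by lia. lra.
      + rewrite <- S_INR, g_interp by lia. lra.
      + assert (ginv y = z).
        { apply ginj; auto. lra. lra. }
        lra. }
  rewrite !Rabs_right by lra.
  split; lra.
Qed.
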